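(* Let $A=KQ/I$ be a finite-dimensional gentle algebra and let $C=c_1\cdots c_m$ be a string for $A$ with an intersecting auto-reaching given by substrings $C[i,j]$ and $C[i',j']$ with $i<i'\le j<j'$. Then $C[i,i']$ is cyclically equivalent to $C[j,j']$, and $C[i,j]$ is a substring of $(C[i,i'])^\infty$, i.e. the word $c_i\cdots c_{j-1}$ is a consecutive subword of the infinite periodic word obtained by repeating $c_i\cdots c_{i'-1}$.
   Context: Letters are arrows $\alpha\in Q_1$ (direct, traversed from $s(\alpha)$ to $t(\alpha)$) and formal inverses $\alpha^{-1}$ (inverse, traversed from $t(\alpha)$ to $s(\alpha)$). A string is a reduced walk in $Q$ avoiding the relations of $I$ and their inverses; it is identified with its inverse walk. For $C=c_1\cdots c_m$ with vertex positions $v_1,\dots,v_{m+1}$ and $1\le i\le j\le m+1$, $C[i,j]=c_i\cdots c_{j-1}$ (trivial if $i=j$). $C[i,j]$ is on top of $C$ if ($i=1$ or $c_{i-1}$ is inverse) and ($j=m+1$ or $c_j$ is direct); at the bottom if ($i=1$ or $c_{i-1}$ is direct) and ($j=m+1$ or $c_j$ is inverse). An auto-reaching of $C$ is given by a substring on top and a substring at the bottom of $C$ which are equal as strings (equal or mutually inverse walks) and satisfy the swinging arms condition: writing the top one as $C[i_0,j_0]$ and the bottom one as $C[i_0',j_0']$, if $i_0'=1$ then $i_0\ne1$, and if $j_0'=m+1$ then $j_0\ne m+1$. It is intersecting if the two substrings $C[i,j]$, $C[i',j']$ satisfy $i<i'\le j<j'$ or $i'<i\le j'<j$. Two words $\alpha_1\cdots\alpha_k$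 and $\beta_1\cdots\beta_k$ are cyclically equivalent if $\beta_1\cdots\beta_k=\alpha_{r+1}\cdots\alpha_k\alpha_1\cdots\alpha_r$ for some $0\le r<k$. *)

(* Defs.v *)
(* Combinatorial presentation of a gentle algebra A = KQ/I:
   a finite quiver (vertices Q0, arrows Q1, source s, target t) together with
   the set of length-2 zero relations generating I, given as a boolean
   predicate rel : rel a b  <->  the path  a b  (first a, then b) lies in I. *)
From mathcomp Require Import all_boot.
Set Implicit Arguments. Unset Strict Implicit. Unset Printing Implicit Defensive.

Inductive letter (A : Type) := Dir of A | Inv of A.
Arguments Dir {A}. Arguments Inv {A}.

Section Gentle.
Variables (Q0 Q1 : finType) (s t : Q1 -> Q0) (rel : Q1 -> Q1 -> bool).

Definition at_most_one (P : Q1 -> Prop) := forall a b, P a -> P b -> a = b.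

Definition composable (p : seq Q1) :=
  forall p1 a b p2, p = p1 ++ a :: b :: p2 -> t a = s b.

Definition contains_relation (p : seq Q1) :=
  exists p1 a b p2, p = p1 ++ a :: b :: p2 /\ rel a b.

Definition gentle :=
  (forall v, #|[pred a | s a == v]| <= 2) /\
  (forall v, #|[pred a | t a == v]| <= 2) /\
  (forall a b, rel a b -> t a = s b) /\
  (forall b, at_most_one (fun a => t a = s b /\ rel a b)) /\
  (forall b, at_most_one (fun a => t a = s b /\ ~~ rel a b)) /\
  (forall a, at_most_one (fun b => t a = s b /\ rel a b)) /\
  (forall a, at_most_one (fun b => t a = s b /\ ~~ rel a b)) /\
  (* finite dimension: every long enough path contains a relation *)
  (exists N, forall p, size p = N -> composable p -> contains_relation p).

Definition lsrc (l : letter Q1) := match l with Dir a => s a | Inv a => t a end.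
Definition ltgt (l : letter Q1) := match l with Dir a => t a | Inv a => s a end.
Definition linv (l : letter Q1) : letter Q1 :=
  match l with Dir a => Inv a | Inv a => Dir a end.

Fixpoint walk_ok (v : Q0) (ls : seq (letter Q1)) : Prop :=
  match ls with
  | [::] => True
  | l :: ls' => lsrc l = v /\ walk_ok (ltgt l) ls'
  end.

Definition walk_end (v : Q0) (ls : seq (letter Q1)) : Q0 := last v (map ltgt ls).

(* two consecutive letters x y are allowed: reduced and avoiding relations
   and their inverses *)
Definition ok_pair (x y : letter Q1) : Prop :=
  match x, y with
  | Dir a, Dir b => ~~ rel a b
  | Inv a, Inv b => ~~ rel b a
  | Dir a, Inv b => a <> b
  | Inv a, Dir b => a <> b
  end.

Definition is_string (v : Q0) (ls : seq (letter Q1)) : Prop :=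
  walk_ok v ls /\
  forall p1 x y p2, ls = p1 ++ x :: y :: p2 -> ok_pair x y.

(* 1-based conventions of the paper: C = c_1 ... c_m, C[i,j] = c_i ... c_(j-1) *)
Definition sub (C : seq (letter Q1)) (i j : nat) := take (j - i) (drop i.-1 C).

(* vertex position v_k (1 <= k <= m+1) of the string starting at v *)
Definition vpos (v : Q0) (C : seq (letter Q1)) (k : nat) := walk_end v (take k.-1 C).

Definition subwalk (v : Q0) (C : seq (letter Q1)) (i j : nat) :=
  (vpos v C i, sub C i j).

Definition same_string (w1 w2 : Q0 * seq (letter Q1)) : Prop :=
  w1 = w2 \/ w1 = (walk_end w2.1 w2.2, rev (map linv w2.2)).

Definition is_dir (o : option (letter Q1)) :=
  exists a, o = Some (Dir a).
Definition is_inv (o : option (letter Q1)) :=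
  exists a, o = Some (Inv a).

(* c_k is onth C k.-1 *)
Definition on_top (C : seq (letter Q1)) (i j : nat) : Prop :=
  (i = 1 \/ is_inv (onth C i.-2)) /\ (j = (size C).+1 \/ is_dir (onth C j.-1)).

Definition at_bottom (C : seq (letter Q1)) (i j : nat) : Prop :=
  (i = 1 \/ is_dir (onth C i.-2)) /\ (j = (size C).+1 \/ is_inv (onth C j.-1)).

Definition valid_range (C : seq (letter Q1)) (i j : nat) :=
  1 <= i /\ i <= j /\ j <= (size C).+1.

Definition auto_reaching (v : Q0) (C : seq (letter Q1)) (top bot : nat * nat) : Prop :=
  let: (i0, j0) := top in
  let: (i0', j0') := bot in
  [/\ valid_range C i0 j0 /\ valid_range C i0' j0',
      on_top C i0 j0 /\ at_bottom C i0' j0',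
      same_string (subwalk v C i0 j0) (subwalk v C i0' j0') &
      (i0' = 1 -> i0 <> 1) /\ (j0' = (size C).+1 -> j0 <> (size C).+1)].

End Gentle.

Definition cyc_equiv (A : Type) (w1 w2 : seq A) :=
  exists r, r < size w1 /\ w2 = rot r w1.

Definition subword_of_power (A : Type) (w p : seq A) :=
  exists k, forall n, n < size w -> onth w n = onth p ((k + n) %% size p).

(* Main.v *)
Require Import Defs.
From mathcomp Require Import all_boot.
From mathcomp Require Import zify.

Lemma onth_drop' (T : Type) n (s : seq T) k : onth (drop n s) k = onth s (n + k).
Proof. by rewrite !onthE map_drop nth_drop. Qed.

Lemma onth_take' (T : Type) n (s : seq T) k :
  onth (take n s) k = if k < n then onth s k else None.
Proof.
rewrite !onthE map_take; case: ifP => h; first by rewrite nth_take.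
move/negbT: h; rewrite -leqNgt => h; rewrite nth_default // size_take size_map; case: ifP => h2; [exact: h | move/negbT: h2; rewrite -leqNgt => h2; exact: leq_trans h2 h].
Qed.

Lemma onth_sub' (T : finType) (C : seq (letter T)) i j k :
  onth (sub C i j) k = if k < j - i then onth C (i.-1 + k) else None.
Proof. by rewrite /sub onth_take' onth_drop'. Qed.

Lemma size_sub' (T : finType) (C : seq (letter T)) i j :
  0 < i -> j <= (size C).+1 -> size (sub C i j) = j - i.
Proof. move=> h1 h2; rewrite /sub size_takel // size_drop; lia. Qed.

Lemma onth_rev' (T : Type) (s : seq T) k :
  onth (rev s) k = if k < size s then onth s (size s - k.+1) else None.
Proof.
rewrite !onthE map_rev; case: ifP => h.
  by rewrite nth_rev size_map.
by rewrite nth_default // size_rev size_map leqNgt h.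
Qed.

Lemma onth_map' (T U : Type) (f : T -> U) (s : seq T) k :
  onth (map f s) k = omap f (onth s k).
Proof. by elim: s k => [|x s IH] [|k] //=. Qed.

Lemma linvK' (Q1 : finType) : involutive (@linv Q1).
Proof. by case. Qed.

Lemma even_odd' S : exists p, S = p + p \/ S = (p + p).+1.
Proof.
elim: S => [|S [p [->|->]]]; first by exists 0; left.
  by exists p; right.
by exists p.+1; left; lia.
Qed.

Theorem mainTheorem8 (Q0 Q1 : finType) (s t : Q1 -> Q0) (rel : Q1 -> Q1 -> bool)
  (hgentle : gentle s t rel)
  (v : Q0) (C : seq (letter Q1)) (hC : is_string s t rel v C)
  (i j i' j' : nat) (hij : i < i' <= j /\ j < j')
  (hAR : auto_reaching s t v C (i, j) (i', j') \/
         auto_reaching s t v C (i', j') (i, j)) :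
  cyc_equiv (sub C i i') (sub C j j') /\
  subword_of_power (sub C i j) (sub C i i').
Proof.
move: hij => [/andP[hii' hi'j] hjj'].
have Hpre : (1 <= i /\ j <= (size C).+1) /\
   (1 <= i' /\ j' <= (size C).+1) /\
   (sub C i j = sub C i' j' \/ sub C i j = rev (map (@linv Q1) (sub C i' j'))).
  case: hAR => [[[r1 r2] _ hs _]|[[r1 r2] _ hs _]].
    move: r1 r2 => [? [? ?]] [? [? ?]]; do 2 (split; first lia).
    case: hs => [[_ ->]|[_ ->]]; [by left | by right].
  move: r1 r2 => [? [? ?]] [? [? ?]]; do 2 (split; first lia).
  case: hs => [[_ ->]|[_ ->]]; first by left.
  by right; rewrite map_rev revK -map_comp (eq_map (@linvK' _)) map_id.
move: Hpre => [[hi1 _] [[hi'1 hj'C] hss]].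
case: hss => hss; have hsz := congr1 size hss.
-
  rewrite size_sub' ?size_sub' in hsz; try lia.
  have key : forall k, k < j - i -> onth C (i.-1 + k) = onth C (i.-1 + (i' - i + k)).
    move=> k hk; move: (congr1 (fun w => onth w k) hss) => /=.
    rewrite !onth_sub' hk ifT; last lia.
    by rewrite (_ : i.-1 + (i' - i + k) = i'.-1 + k) //; lia.
  move Ed : (i' - i) key => d key.
  move EL : (j - i) key hsz => L key hsz.
  have hd0 : 0 < d by lia.
  have P : forall n, n < L + d -> onth C (i.-1 + n) = onth C (i.-1 + n %% d).
    elim/ltn_ind => n IH hn.
    case: (ltnP n d) => hnd; first by rewrite modn_small.
    rewrite (_ : i.-1 + n = i.-1 + (d + (n - d))); last lia.
    rewrite -key; last lia.
    rewrite IH; [|lia|lia].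
    by rewrite -{2}(subnK hnd) modnDr.
  have Qm : forall m n, m < L + d -> n < L + d -> m %% d = n %% d ->
      onth C (i.-1 + m) = onth C (i.-1 + n).
    by move=> m n hm hn e; rewrite P // (P n) // e.
  have hSi : size (sub C i i') = d by rewrite size_sub'; lia.
  split.
  + exists ((j - i) %% d); rewrite hSi ltn_pmod //; split => //.
    have hr := ltn_pmod (j - i) hd0.
    have e1 := modnDml (j - i) 0 d.
    move Er : ((j - i) %% d) hr e1 => r hr e1.
    apply: eq_from_onth => k.
    rewrite /rot onth_cat onth_drop' onth_take' size_drop hSi !onth_sub' Ed.
    case: (ltnP k d) => hkd.
    * rewrite ifT; last lia.
      rewrite (_ : j.-1 + k = i.-1 + (j - i + k)); last lia.
      case: (ltnP k (d - r)) => hk2.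
      -- rewrite ifT; last lia.
         apply: Qm; try lia.
         by rewrite -modnDml Er.
      -- rewrite ifT; last lia. rewrite ifT; last lia.
         apply: Qm; try lia.
         rewrite -modnDml Er (_ : r + k = k - (d - r) + d); last lia.
         by rewrite modnDr.
    * rewrite ifF; last lia. rewrite ifF; last lia. rewrite ifF //; lia.
  + exists 0 => n; rewrite add0n hSi size_sub' //; last lia.
    rewrite EL => hn; rewrite !onth_sub' Ed EL hn ltn_pmod // P //; lia.
- (* inverse case: impossible *)
  exfalso.
  rewrite size_rev size_map size_sub' ?size_sub' in hsz; try lia.
  have key : forall k, k < j - i ->
      onth C (i.-1 + k) = omap (@linv Q1) (onth C (i'.-1 + (j - i - k.+1))).
    move=> k hk; move: (congr1 (fun w => onth w k) hss) => /=.
    rewrite onth_sub' onth_rev' size_map size_sub'; try lia.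
    rewrite hk ifT; last lia.
    rewrite onth_map' onth_sub' ifT; last lia.
    by rewrite (_ : j' - i' - k.+1 = j - i - k.+1) //; lia.
  have [p [hp|hp]] := even_odd' (i.-1 + i'.-1 + (j - i) - 1).
  + have := key (p - i.-1) ltac:(lia).
    rewrite (_ : i.-1 + (p - i.-1) = p); last lia.
    rewrite (_ : i'.-1 + (j - i - (p - i.-1).+1) = p); last lia.
    have hpC : p < size C by lia.
    case E: (onth C p) => [x|]; last by move: (onthTE C p); rewrite E hpC.
    by case: x E => a _ /= [].
  + have := key (p - i.-1) ltac:(lia).
    rewrite (_ : i.-1 + (p - i.-1) = p); last lia.
    rewrite (_ : i'.-1 + (j - i - (p - i.-1).+1) = p.+1); last lia.
    have hpC : p.+1 < size C by lia.
    case E: (onth C p) => [x|]; last by move: (onthTE C p); rewrite E ltnW.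
    case E2: (onth C p.+1) => [y|]; last by move: (onthTE C p.+1); rewrite E2 hpC.
    move=> /= [exy].
    have hd : C = take p C ++ x :: y :: drop p.+2 C.
      rewrite -{1}(cat_take_drop p C); congr (_ ++ _).
      rewrite (drop_nth x) ?(ltnW hpC) // (drop_nth x) //.
      by rewrite (onth_nth _ _ _ _ E) (onth_nth _ _ _ _ E2).
    have := hC.2 _ _ _ _ hd.
    by rewrite exy; case: y {E2 exy hd} => a /=.
Qed.
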